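(* (1) $M=\bigoplus_{d\in \mathbb{N}} G_d$, where $G_d$ is the set of permutations of $\mathcal{X}_d$ which commute with $\mathrm{Gal}(\mathbb{F}_{q^d}:\mathbb{F}_q)$. (2) $G_d\cong \mathbb{Z}/d\mathbb{Z} \wr \mathrm{Perm}(r_d)$, where $r_d$ is the number of orbits of size $d$ (i.e. $r_d=d^{-1}\#\mathcal{X}_d$). (3) Equivalently, $G_d\cong (\mathbb{Z}/d\mathbb{Z})^{r_d}\rtimes_h \mathrm{Perm}(r_d)$, where $h:\mathrm{Perm}(r_d)\to \mathrm{Aut}((\mathbb{Z}/d\mathbb{Z})^{r_d})$ is given by $h(\sigma)(a_1,\dots,a_{r_d})=(a_{(1)^\sigma},\dots,a_{(r_d)^\sigma})$.
   Context: $M$ denotes the set of permutations of $\overline{\mathbb{F}}_q^n$ induced by profinite polynomial endomorphisms over $\mathbb{F}_q$; equivalently, $M$ is the set of permutations of $\overline{\mathbb{F}}_q^n$ commuting with the coordinatewise action of $\mathrm{Gal}(\overline{\mathbb{F}}_q:\mathbb{F}_q)$. $\mathcal{X}_d$ is the union of all orbits of size $d$ of $\mathrm{Gal}(\overline{\mathbb{F}}_q:\mathbb{F}_q)$ acting on $\overline{\mathbb{F}}_q^n$. Permutations act on the right: $(x)^{\sigma\rho}=((x)^\sigma)^\rho$. *)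

(* Defs.v *)
From HB Require Import structures.
From mathcomp Require Import all_boot all_order all_algebra all_fingroup.
Set Implicit Arguments. Unset Strict Implicit. Unset Printing Implicit Defensive.
Import GRing.Theory.
Local Open Scope ring_scope.

Definition has_card (T : eqType) (A : T -> Prop) (N : nat) : Prop :=
  exists s : seq T, size s = N /\ uniq s /\ (forall x, A x <-> x \in s).

(* Setting: F = F_q (any finite field), K = an algebraic closure of F
   (algebraically closed field, algebraic over the image of iota : F -> K). *)
Section Setting.
Variables (F : finFieldType) (K : closedFieldType) (iota : {rmorphism F -> K}).
Variable n : nat.

Definition isGal (g : K -> K) : Prop :=
  [/\ bijective g, (forall x y, g (x + y) = g x + g y),
      (forall x y, g (x * y) = g x * g y), g 1 = 1
    & (forall a, g (iota a) = iota a)].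

Definition gact (g : K -> K) (x : 'rV[K]_n) : 'rV[K]_n := map_mx g x.

Definition in_orbit (x y : 'rV[K]_n) : Prop :=
  exists g, isGal g /\ y = gact g x.

Definition inX (d : nat) (x : 'rV[K]_n) : Prop := has_card (in_orbit x) d.

Definition Mperm :=
  {s : 'rV[K]_n -> 'rV[K]_n |
     bijective s /\ forall g, isGal g -> forall x, s (gact g x) = gact g (s x)}.

Definition Xd (d : nat) := {x : 'rV[K]_n | inX d x}.

Definition Gd (d : nat) :=
  {f : Xd d -> Xd d |
     bijective f /\ forall g, isGal g -> forall x y : Xd d,
        sval y = gact g (sval x) -> sval (f y) = gact g (sval (f x))}.

End Setting.
Arguments inX [F K] iota n d x.
Arguments in_orbit [F K] iota n x y.

(* Permutations act on the right: h = "first f, then g". *)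
Definition Gd_comp F K iota n d (f g h : @Gd F K iota n d) : Prop :=
  forall x, sval h x = sval g (sval f x).

(* Z/dZ, for d >= 1 *)
Definition Zmod (d : nat) := 'I_(d.-1).+1.

(* Wreath product A wr Perm(r) = A^r x| Perm(r), Perm(r) permuting the
   coordinates; MathComp permutations compose on the right ((s*t) i = t (s i)). *)
Definition wreath_mul (A : zmodType) (r : nat)
  (u v : {ffun 'I_r -> A} * {perm 'I_r}) : {ffun 'I_r -> A} * {perm 'I_r} :=
  ([ffun i => u.1 i + v.1 (u.2 i)], (u.2 * v.2)%g).

Definition sdp_mul (A : zmodType) (r : nat)
  (h : {perm 'I_r} -> {ffun 'I_r -> A} -> {ffun 'I_r -> A})
  (u v : {ffun 'I_r -> A} * {perm 'I_r}) : {ffun 'I_r -> A} * {perm 'I_r} :=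
  (u.1 + h u.2 v.1, (u.2 * v.2)%g).

Definition hperm (A : zmodType) (r : nat) (s : {perm 'I_r})
  (a : {ffun 'I_r -> A}) : {ffun 'I_r -> A} := [ffun i => a (s i)].

Definition is_iso (G W : Type) (relmul : G -> G -> G -> Prop)
  (mulW : W -> W -> W) (Psi : G -> W) : Prop :=
  bijective Psi /\ forall f g h, relmul f g h -> Psi h = mulW (Psi f) (Psi g).

(* Main.v *)
Require Import Defs.
From Stdlib Require Import ProofIrrelevance FunctionalExtensionality ClassicalEpsilon.
From HB Require Import structures.
From mathcomp Require Import all_boot all_order all_algebra all_fingroup.
From mathcomp Require Import cyclic finfield separable cyclotomic.
Set Implicit Arguments. Unset Strict Implicit. Unset Printing Implicit Defensive.
Import GRing.Theory.
Local Open Scope ring_scope.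

Section Frob.
Variables (F : finFieldType) (K : closedFieldType) (iota : {rmorphism F -> K}).

Definition frk (k : nat) (y : K) : K := y ^+ (#|F| ^ k).

Lemma card_pnat : exists p, p \in [pchar K] /\ ([pchar K]).-nat #|F|.
Proof.
have [p pr_p pcF] := finPcharP F.
have pcK := rmorph_pchar iota pcF.
exists p; split => //.
have -> : #|F| = (p ^ logn p #|F|)%N by exact: (card_pprimeChar pcF).
by rewrite pnatX (eq_pnat _ (pcharf_eq pcK)) pnat_id.
Qed.

Lemma frkD1 k x y : frk k (x + y) = frk k x + frk k y.
Proof.
have [p [pc pn]] := card_pnat.
by rewrite /frk exprDn_pchar // pnatX pn.
Qed.

Lemma frkM k x y : frk k (x * y) = frk k x * frk k y.
Proof. by rewrite /frk exprMn. Qed.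

Lemma frk1 k : frk k 1 = 1.
Proof. by rewrite /frk expr1n. Qed.

Lemma frk0 k : frk k 0 = 0.
Proof. rewrite /frk expr0n expn_eq0. have := finNzRing_gt1 F. by case: #|F|. Qed.

Lemma frk_add k (j : nat) x : frk (j + k) x = frk j (frk k x).
Proof. by rewrite /frk -exprM expnD mulnC. Qed.

Lemma frk_0 x : frk 0 x = x.
Proof. by rewrite /frk expn0 expr1. Qed.

Lemma frk_iota k a : frk k (iota a) = iota a.
Proof.
rewrite /frk -rmorphXn; congr (iota _).
elim: k => [|k IH]; first by rewrite expn0 expr1.
by rewrite expnSr exprM IH expf_card.
Qed.

Lemma frkN k y : frk k (- y) = - frk k y.
Proof. by apply/eqP; rewrite -addr_eq0 -frkD1 addNr frk0. Qed.

Lemma frk_inj k : injective (frk k).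
Proof.
move=> x y /eqP; rewrite -subr_eq0 => /eqP.
have -> : frk k x - frk k y = frk k (x - y).
  by rewrite frkD1 frkN.
move/eqP; rewrite /frk expf_eq0 expn_gt0 (ltnW (finNzRing_gt1 F)) /= subr_eq0 => /eqP //.
Qed.

Lemma frk_surj k y : exists x, frk k x = y.
Proof.
have : size ('X^(#|F| ^ k) - y%:P : {poly K}) != 1%N.
  rewrite size_XnsubC ?expn_gt0 ?(ltnW (finNzRing_gt1 F)) //.
  by rewrite eqSS expn_eq0 negb_and; have := finNzRing_gt1 F; case: #|F|.
move/closed_rootP => [x]; rewrite rootE !hornerE subr_eq0 => /eqP h.
by exists x.
Qed.

Lemma frk_gal k : isGal iota (frk k).
Proof.
split.
- have h : forall y, exists x, frk k x == y.
    by move=> y; have [x hx] := frk_surj k y; exists x; apply/eqP.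
  pose g y := xchoose (h y).
  exists g => [x|y]; last exact/eqP/(xchooseP (h y)).
  apply: (@frk_inj k); rewrite /g. exact/eqP/(xchooseP (h (frk k x))).
- exact: frkD1.
- exact: frkM.
- exact: frk1.
- exact: frk_iota.
Qed.


Lemma frk_nmod k : nmod_morphism (frk k).
Proof. by split; [exact: frk0 | exact: frkD1]. Qed.
Lemma frk_monoid k : monoid_morphism (frk k).
Proof. by split; [exact: frk1 | exact: frkM]. Qed.
HB.instance Definition _ k := GRing.isNmodMorphism.Build K K (frk k) (frk_nmod k).
HB.instance Definition _ k := GRing.isMonoidMorphism.Build K K (frk k) (frk_monoid k).

Lemma card_gt1 : (1 < #|F|)%N. Proof. exact: finNzRing_gt1. Qed.

Lemma fixed_iota c : frk 1 c = c -> exists a, c = iota a.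
Proof.
rewrite /frk expn1 => hc.
pose s := [seq iota a | a <- enum F].
case hcs: (c \in s).
  by case/mapP: hcs => a _ ->; exists a.
pose p : {poly K} := 'X^#|F| - 'X.
have sp : size p = (#|F|).+1.
  by rewrite size_polyDl ?size_polyXn // size_polyN size_polyX ltnS card_gt1.
have pn0 : p != 0 by rewrite -size_poly_eq0 sp.
have hall : all (root p) (c :: s).
  apply/allP => z; rewrite inE => /orP[/eqP->|].
    by rewrite /root !hornerE hc subrr.
  by case/mapP=> a _ ->; rewrite /root !hornerE -rmorphXn expf_card subrr.
have hu : uniq (c :: s).
  rewrite /= hcs map_inj_uniq ?enum_uniq //; exact: fmorph_inj.
move: (max_poly_roots pn0 hall hu).
by rewrite sp /= size_map -cardE ltnn.
Qed.

Lemma Qnat_neq0 m : (0 < m)%N -> ((#|F| ^ m).-1%:R : K) != 0.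
Proof.
move=> m0.
have [p pr_p pcF] := finPcharP F.
have pcK := rmorph_pchar iota pcF.
have eq : #|F| = (p ^ logn p #|F|)%N by exact: (card_pprimeChar pcF).
have F0 : (#|F|%:R : F) = 0.
  have lg : (0 < logn p #|F|)%N.
    case: (logn p #|F|) eq => // h; have := card_gt1; by rewrite h.
  rewrite eq natrX (pcharf0 pcF) expr0n. by case: (logn p #|F|) lg.
have Q0 : ((#|F| ^ m)%:R : K) = 0.
  by rewrite natrX -(rmorph_nat iota) F0 rmorph0 expr0n; case: m m0.
have hQ : (1 <= #|F| ^ m)%N by rewrite expn_gt0 ltnW // card_gt1.
rewrite -subn1 (natrB K hQ) Q0 sub0r oppr_eq0 oner_eq0 //.
Qed.


Lemma rot_perm (T : eqType) (h : nat -> T) m : (0 < m)%N -> h m = h 0%N ->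
  perm_eq [seq h (1 + k)%N | k <- seq.iota 0 m] [seq h k | k <- seq.iota 0 m].
Proof.
case: m => // m' _ hm.
have e0 : seq.iota 0 m'.+1 = seq.iota 0 m' ++ [:: m'] by rewrite -addn1 iotaD.
have e1 : [seq h k | k <- seq.iota 0 m'.+1] = h 0%N :: [seq h (1 + k)%N | k <- seq.iota 0 m'].
  by rewrite /= (iotaDl 1 0) -map_comp.
rewrite e1 e0 map_cat /= add1n hm cats1 perm_rcons //.
Qed.

Section Gal.
Variable g : K -> K.
Hypothesis hg : isGal iota g.

Lemma galD x y : g (x + y) = g x + g y. Proof. by case: hg. Qed.
Lemma galM x y : g (x * y) = g x * g y. Proof. by case: hg. Qed.
Lemma gal1 : g 1 = 1. Proof. by case: hg. Qed.
Lemma gal_iota a : g (iota a) = iota a. Proof. by case: hg. Qed.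
Lemma gal_bij : bijective g. Proof. by case: hg. Qed.
Lemma gal_inj : injective g. Proof. exact: bij_inj gal_bij. Qed.
Lemma gal0 : g 0 = 0.
Proof. by apply: (addrI (g 0)); rewrite -galD !addr0. Qed.
Lemma galX x i : g (x ^+ i) = (g x) ^+ i.
Proof. by elim: i => [|i IH]; rewrite ?expr0 ?gal1 // !exprS galM IH. Qed.

Lemma gal_horner (P : {poly K}) x :
  (forall i, g (P`_i) = P`_i) -> P.[g x] = g (P.[x]).
Proof.
move=> hP; rewrite !horner_coef.
rewrite (big_morph g galD gal0); apply: eq_bigr => i _.
by rewrite galM galX hP.
Qed.

Lemma galC m : (0 < m)%N -> exists j, forall y, frk m y = y -> g y = frk j y.
Proof.
move=> m0.
set Q := (#|F| ^ m)%N.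
have Q1 : (1 < Q)%N by rewrite /Q -(exp1n m) ltn_exp2r // card_gt1.
set N := Q.-1.
have N0 : (0 < N)%N by rewrite /N -ltnS prednK // ltnW.
have [rs hrs] := closed_field_poly_normal ('X^N - 1 : {poly K}).
rewrite (monicP (monicXnsubC 1 N0)) scale1r in hrs.
have szrs : size rs = N.
  by have := size_prod_XsubC rs id; rewrite -hrs size_XnsubC // => -[].
have urs : uniq rs.
  by rewrite -separable_prod_XsubC -hrs; apply: separable_Xn_sub_1; exact: Qnat_neq0.
have ars : all N.-unity_root rs.
  by apply/allP => z zr; rewrite /root_of_unity /= -[X in root X](esym hrs) root_prod_XsubC.
have [al _ pal] := hasP (has_prim_root N0 ars urs (eq_leq (esym szrs))).
have alQ : frk m al = al.
  by rewrite /frk -/Q -(prednK (ltnW Q1)) exprS -/N (prim_expr_order pal) mulr1.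
have pw : forall y, frk m y = y -> y = 0 \/ exists i, y = al ^+ i.
  move=> y hy; have [->|y0] := eqVneq y 0; first by left.
  right; have yN : y ^+ N = 1.
    apply: (mulfI y0); rewrite mulr1 -exprS /N prednK; last exact: ltnW.
    exact: hy.
  by have [i ->] := prim_rootP pal yN; exists i.
pose P := \prod_(z <- [seq frk k al | k <- seq.iota 0 m]) ('X - z%:P).
have fixP : map_poly (frk 1) P = P.
  rewrite /P big_map map_prod_XsubC.
  rewrite (eq_bigr (fun k => 'X - (frk (1 + k) al)%:P)); last by move=> k _; rewrite frk_add.
  rewrite -(big_map (fun k => frk (1 + k) al) predT (fun z => 'X - z%:P)).
  rewrite -(big_map (fun k => frk k al) predT (fun z => 'X - z%:P)).
  apply: perm_big.
  by apply: rot_perm => //; rewrite frk_0 addn0.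
have cP : forall i, g (P`_i) = P`_i.
  move=> i; have : frk 1 P`_i = P`_i by rewrite -{2}fixP coef_map.
  by move/fixed_iota => [a ->]; rewrite gal_iota.
have rP : root P (g al).
  rewrite /root gal_horner //.
  have -> : P.[al] = 0.
    apply/eqP; rewrite -/(root P al) root_prod_XsubC.
    by apply/mapP; exists 0%N; [rewrite mem_iota add0n m0 | rewrite frk_0].
  by rewrite gal0.
move: rP; rewrite root_prod_XsubC => /mapP [j _ hj].
exists j => y /pw [->|[i ->]]; first by rewrite gal0 rmorph0.
by rewrite galX hj rmorphXn.
Qed.

End Gal.

Lemma frk_mulper m c y : frk m y = y -> frk (m * c) y = y.
Proof.
move=> h; elim: c => [|c IH]; first by rewrite muln0 frk_0.
by rewrite mulnS frk_add IH h.
Qed.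

Hypothesis algK : forall x : K, exists p : {poly F}, p != 0 /\ root (map_poly iota p) x.

Lemma scal_per y : exists m, (0 < m)%N /\ frk m y = y.
Proof.
have [p [p0 ry]] := algK y.
set P := map_poly iota p.
have P0 : P != 0 by rewrite map_poly_eq0.
have rk : forall k, root P (frk k y).
  move=> k; have := rmorph_root (frk k) ry.
  rewrite /P -map_poly_comp (eq_map_poly (frk_iota k)) //.
pose s := [seq frk k y | k <- seq.iota 0 (size P)].
have : ~~ uniq s.
  apply/negP => us.
  have al : all (root P) s by apply/allP => z /mapP [k _ ->].
  by have := max_poly_roots P0 al us; rewrite size_map size_iota ltnn.
case/(uniqPn 0) => i [j [ij js]].
rewrite size_map size_iota in js.
rewrite !(nth_map 0%N) ?size_iota ?(ltn_trans ij) // !nth_iota ?(ltn_trans ij) // !add0n.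
move=> e; exists (j - i)%N; split; first by rewrite subn_gt0.
apply: (@frk_inj i); rewrite -frk_add subnKC ?(ltnW ij) //.
Qed.

Lemma seq_per (s : seq K) : exists m, (0 < m)%N /\ forall y, y \in s -> frk m y = y.
Proof.
elim: s => [|y s [m [m0 hm]]]; first by exists 1%N.
have [m' [m'0 hm']] := scal_per y.
exists (m * m')%N; split; first by rewrite muln_gt0 m0.
move=> z; rewrite inE => /orP [/eqP ->|zs]; first by rewrite mulnC frk_mulper.
by rewrite frk_mulper // hm.
Qed.

Variable n : nat.
Definition FrX k (x : 'rV[K]_n) : 'rV[K]_n := @Defs.gact K n (frk k) x.

Lemma FrX_add j k x : FrX (j + k) x = FrX j (FrX k x).
Proof. by apply/matrixP => a b; rewrite /FrX /Defs.gact !mxE frk_add. Qed.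
Lemma FrX_0 x : FrX 0 x = x.
Proof. by apply/matrixP => a b; rewrite /FrX /Defs.gact !mxE frk_0. Qed.
Lemma FrX_inj k : injective (FrX k).
Proof.
move=> x y /matrixP h; apply/matrixP => a b.
by have := h a b; rewrite /FrX /Defs.gact !mxE => /frk_inj.
Qed.
Lemma FrX_orbit k x : Defs.in_orbit iota n x (FrX k x).
Proof. by exists (frk k); split => //; exact: frk_gal. Qed.

Lemma FrX_fix m x : FrX m x = x <-> forall a b, frk m (x a b) = x a b.
Proof.
split => [/matrixP h a b|h]; first by have := h a b; rewrite /FrX /Defs.gact mxE.
by apply/matrixP => a b; rewrite /FrX /Defs.gact mxE h.
Qed.

Lemma galCX g d : isGal iota g -> (0 < d)%N ->
  exists j, forall x, FrX d x = x -> Defs.gact g x = FrX j x.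
Proof.
move=> hg d0; have [j hj] := galC hg d0.
exists j => x /FrX_fix hx; apply/matrixP => a b.
by rewrite /FrX /Defs.gact !mxE hj.
Qed.

Lemma per_ex x : exists m, (0 < m)%N && (FrX m x == x).
Proof.
have [m [m0 hm]] := seq_per [seq x ord0 b | b <- enum 'I_n].
exists m; rewrite m0 /=; apply/eqP/FrX_fix => a b.
rewrite (ord1 a); apply: hm; apply/mapP; exists b => //; rewrite mem_enum //.
Qed.

Definition per x := ex_minn (per_ex x).

Lemma per_gt0 x : (0 < per x)%N.
Proof. by rewrite /per; case: ex_minnP => m /andP[]. Qed.
Lemma per_fix x : FrX (per x) x = x.
Proof. by rewrite /per; case: ex_minnP => m /andP[_ /eqP]. Qed.
Lemma per_min x m : (0 < m)%N -> FrX m x = x -> (per x <= m)%N.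
Proof. by move=> m0 hm; rewrite /per; case: ex_minnP => k _ ; apply; rewrite m0 hm eqxx. Qed.

Lemma FrX_per_mul x c : FrX (c * per x) x = x.
Proof.
elim: c => [|c IH]; first by rewrite mul0n FrX_0.
by rewrite mulSn FrX_add IH per_fix.
Qed.

Lemma FrX_mod x k : FrX k x = FrX (k %% per x) x.
Proof. by rewrite {1}(divn_eq k (per x)) addnC FrX_add FrX_per_mul. Qed.

Lemma FrX_eq_small x i j : (i < per x)%N -> (j < per x)%N -> FrX i x = FrX j x -> i = j.
Proof.
wlog ij : i j / (i <= j)%N.
  move=> H hi hj e; case: (leqP i j) => h; first exact: H.
  by apply/esym/H => //; exact: ltnW.
move=> hi hj e; apply/eqP; rewrite eqn_leq ij /=; apply/negP => /negP; rewrite -ltnNge => lt.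
have : FrX (j - i) x = x.
  by apply: (@FrX_inj i); rewrite -FrX_add subnKC.
move=> h0; have h := @per_min x (j - i)%N; rewrite subn_gt0 in h; have {h h0} h := h lt h0.
by have := leq_ltn_trans h (leq_ltn_trans (leq_subr i j) hj); rewrite ltnn.
Qed.

Lemma orbit_iff x y : Defs.in_orbit iota n x y <-> exists k, y = FrX k x.
Proof.
split => [[g [hg ->]]|[k ->]]; last exact: FrX_orbit.
have [j hj] := galCX hg (per_gt0 x).
by exists j; apply: hj; exact: per_fix.
Qed.

Definition orbseq x := [seq FrX k x | k <- seq.iota 0 (per x)].

Lemma orbseq_uniq x : uniq (orbseq x).
Proof.
rewrite map_inj_in_uniq ?iota_uniq // => i j; rewrite !mem_iota !add0n.
exact: FrX_eq_small.
Qed.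

Lemma mem_orbseq x y : y \in orbseq x <-> exists k, y = FrX k x.
Proof.
split => [/mapP [k _ ->]|[k ->]]; first by exists k.
rewrite FrX_mod; apply: map_f; rewrite mem_iota add0n ltn_pmod //; exact: per_gt0.
Qed.

Lemma has_card_uniq (T : eqType) (A : T -> Prop) N N' :
  has_card A N -> has_card A N' -> N = N'.
Proof.
move=> [s [<- [us hs]]] [s' [<- [us' hs']]].
apply: perm_size; apply: uniq_perm => // z.
by apply/idP/idP => h; [apply/hs'/hs | apply/hs/hs'].
Qed.

Lemma orbit_card x : has_card (Defs.in_orbit iota n x) (per x).
Proof.
exists (orbseq x); split; first by rewrite size_map size_iota.
split; first exact: orbseq_uniq.
by move=> y; split => [/orbit_iff/mem_orbseq|/mem_orbseq/orbit_iff].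
Qed.

Lemma inX_per d x : inX iota n d x <-> per x = d.
Proof.
split => [h|<-]; last exact: orbit_card.
exact: has_card_uniq (orbit_card x) h.
Qed.

Lemma per_comm (f : 'rV[K]_n -> 'rV[K]_n) x : injective f ->
  (forall k z, f (FrX k z) = FrX k (f z)) -> per (f x) = per x.
Proof.
move=> fi fc; rewrite /per; apply: eq_ex_minn => m.
by rewrite -fc (inj_eq fi).
Qed.

Lemma per_FrX j x : per (FrX j x) = per x.
Proof.
apply: per_comm; first exact: FrX_inj.
by move=> k z; rewrite -!FrX_add addnC.
Qed.

Lemma per_gal g x : isGal iota g -> per (Defs.gact g x) = per x.
Proof.
move=> hg; have [k ->] : exists k, Defs.gact g x = FrX k x.
  by apply/orbit_iff; exists g.
exact: per_FrX.
Qed.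


Lemma sig_eq (A : Type) (P : A -> Prop) (u v : {x | P x}) : sval u = sval v -> u = v.
Proof.
case: u v => [x px] [y py] /= e; subst y; congr exist; exact: proof_irrelevance.
Qed.

Lemma Mcomm (s : Mperm iota n) k z : sval s (FrX k z) = FrX k (sval s z).
Proof. by case: s => f [_ h] /=; apply: h; exact: frk_gal. Qed.

Lemma Minj (s : Mperm iota n) : injective (sval s).
Proof. by case: s => f [h _] /=; exact: bij_inj. Qed.

Lemma restr_in (s : Mperm iota n) d (y : Xd iota n d) : inX iota n d (sval s (sval y)).
Proof.
apply/inX_per; rewrite per_comm; first by apply/inX_per; exact: svalP.
  exact: Minj.
exact: Mcomm.
Qed.

Definition restr_fun (s : Mperm iota n) d : Xd iota n d -> Xd iota n d :=
  fun y => exist _ (sval s (sval y)) (restr_in s y).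
Arguments restr_fun : clear implicits.

Lemma restr_prop (s : Mperm iota n) d :
  bijective (restr_fun s d) /\ forall g, isGal iota g -> forall x y : Xd iota n d,
    sval y = Defs.gact g (sval x) ->
    sval (restr_fun s d y) = Defs.gact g (sval (restr_fun s d x)).
Proof.
case: s => f [[t ft tf] hf]; split; last first.
  by move=> g hg x y /= ->; apply: hf.
have tc : forall k z, t (FrX k z) = FrX k (t z).
  move=> k z; apply: (bij_inj (Bijective ft tf)).
  by rewrite tf hf ?tf //; exact: frk_gal.
have tin : forall y : Xd iota n d, inX iota n d (t (sval y)).
  move=> y; apply/inX_per; rewrite per_comm; first by apply/inX_per; exact: svalP.
    exact: can_inj tf.
  exact: tc.
exists (fun y => exist _ (t (sval y)) (tin y)) => y; apply: sig_eq => /=.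
  exact: ft.
exact: tf.
Qed.

Definition Phi (s : Mperm iota n) d : Gd iota n d := exist _ (restr_fun s d) (restr_prop s d).

Lemma inX_self x : inX iota n (per x) x.
Proof. exact/inX_per. Qed.

Definition extf (H : forall d, Xd iota n d -> Xd iota n d) (x : 'rV[K]_n) : 'rV[K]_n :=
  sval (H (per x) (exist _ x (inX_self x))).

Lemma extfK H d (y : Xd iota n d) : extf H (sval y) = sval (H d y).
Proof.
case: y => x hx /=; have e : per x = d by apply/inX_per.
subst d; rewrite /extf; do 2 f_equal; apply: sig_eq => //.
Qed.

Lemma extf_prop (G : forall d, Gd iota n d) :
  bijective (extf (fun d => sval (G d))) /\
  forall g, isGal iota g -> forall x, extf (fun d => sval (G d)) (Defs.gact g x)
                                    = Defs.gact g (extf (fun d => sval (G d)) x).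
Proof.
split.
  have hinv : forall d, exists h : Xd iota n d -> Xd iota n d,
      cancel (sval (G d)) h /\ cancel h (sval (G d)).
    by move=> d; have [[h fh hf] _] := svalP (G d); exists h.
  pose Hi d := proj1_sig (constructive_indefinite_description _ (hinv d)).
  have HiP : forall d, cancel (sval (G d)) (Hi d) /\ cancel (Hi d) (sval (G d)).
    by move=> d; exact: proj2_sig (constructive_indefinite_description _ (hinv d)).
  exists (extf Hi) => x.
    by rewrite {2}/extf extfK (proj1 (HiP _)).
  by rewrite {2}/extf extfK (proj2 (HiP _)).
move=> g hg x.
have hx : inX iota n (per x) (Defs.gact g x) by apply/inX_per; exact: per_gal.
rewrite (extfK _ (exist _ (Defs.gact g x) hx)) /extf.
by case: (G (per x)) => f [_ hf] /=; apply: hf.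
Qed.

Definition Phiinv (G : forall d, Gd iota n d) : Mperm iota n :=
  exist _ (extf (fun d => sval (G d))) (extf_prop G).

Lemma Phi_bij : bijective Phi.
Proof.
exists Phiinv => [s|G].
  apply: sig_eq; apply: functional_extensionality => x /=.
  by rewrite /extf /=.
apply: functional_extensionality_dep => d.
apply: sig_eq; apply: functional_extensionality => y /=.
apply: sig_eq => /=; rewrite /restr_fun /=.
exact: (extfK (fun d => sval (G d)) y).
Qed.

Lemma Phi_comp (s t u : Mperm iota n) :
  (forall x, sval u x = sval t (sval s x)) -> forall d, Gd_comp (Phi s d) (Phi t d) (Phi u d).
Proof. by move=> h d x; apply: sig_eq => /=. Qed.

Lemma Phi_val s d (x : Xd iota n d) : sval (sval (Phi s d) x) = sval s (sval x).
Proof. by []. Qed.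

Lemma fin_fix d : (0 < d)%N -> exists E : seq 'rV[K]_n, forall x, FrX d x = x -> x \in E.
Proof.
move=> d0.
pose p : {poly K} := 'X^(#|F| ^ d) - 'X.
have p0 : p != 0.
  rewrite /p -size_poly_eq0 size_polyDl ?size_polyXn // size_polyN size_polyX ltnS.
  by rewrite (leq_trans card_gt1) // -{1}[#|F|]expn1 leq_pexp2l // ltnW // card_gt1.
have [rs hrs] := closed_field_poly_normal p.
have inrs : forall y, frk d y = y -> y \in rs.
  move=> y hy; rewrite -root_prod_XsubC -(@rootZ _ y (lead_coef p)) ?lead_coef_eq0 //.
  by rewrite -hrs /root /p !hornerE -/(frk d y) hy subrr.
exists (map (fun f : {ffun 'I_n -> seq_sub rs} => \row_b (val (f b))) (enum {ffun 'I_n -> seq_sub rs})) => x hx.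
have hb : forall b, x ord0 b \in rs by move=> b; apply: inrs; apply: (proj1 (FrX_fix d x) hx).
apply/mapP; exists [ffun b => (Sub (x ord0 b) (hb b) : seq_sub rs)]; first by rewrite mem_enum.
by apply/matrixP => a b; rewrite (ord1 a) mxE ffunE.
Qed.

Section Part2.
Variables (d' : nat) (E : seq 'rV[K]_n).
Hypothesis hE : forall x, FrX d'.+1 x = x -> x \in E.
Local Notation d := d'.+1.

Definition rep x := choose (fun y => y \in orbseq x) x.

Lemma self_orbseq x : x \in orbseq x.
Proof. by apply/mem_orbseq; exists 0%N; rewrite FrX_0. Qed.

Lemma rep_in x : rep x \in orbseq x.
Proof. exact: chooseP (self_orbseq x). Qed.

Lemma orbseq_eq x y : y \in orbseq x -> orbseq y =i orbseq x.
Proof.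
move/mem_orbseq => [k ->] z; apply/idP/idP => /mem_orbseq [j ->]; apply/mem_orbseq.
  by exists (j + k)%N; rewrite FrX_add.
exists (j + (per x - k %% per x))%N.
rewrite [in RHS](FrX_mod x k) -FrX_add -addnA subnK; last by rewrite ltnW // ltn_pmod // per_gt0.
by rewrite FrX_add per_fix.
Qed.

Lemma rep_eq x y : y \in orbseq x -> rep y = rep x.
Proof.
move=> h; rewrite /rep (eq_choose (orbseq_eq h)); apply: choose_id => //.
exact: self_orbseq.
Qed.

Lemma per_rep x : per (rep x) = per x.
Proof. by have /mem_orbseq [k ->] := rep_in x; rewrite per_FrX. Qed.

Lemma rep_FrX k x : rep (FrX k x) = rep x.
Proof. by apply: rep_eq; apply/mem_orbseq; exists k. Qed.

Lemma rep_idem x : rep (rep x) = rep x.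
Proof. exact: rep_eq (rep_in x). Qed.

Definition Ed := [seq x <- E | per x == d].
Definition reps := undup (map rep Ed).
Definition r := size reps.
Definition R (i : 'I_r) := nth 0 reps i.

Lemma reps_uniq : uniq reps. Proof. exact: undup_uniq. Qed.

Lemma reps_prop z : z \in reps -> per z = d /\ rep z = z.
Proof.
rewrite mem_undup => /mapP [x]; rewrite mem_filter => /andP [/eqP px _] ->.
by rewrite per_rep px rep_idem.
Qed.

Lemma rep_reps x : per x = d -> rep x \in reps.
Proof.
move=> px; rewrite mem_undup; apply: map_f; rewrite mem_filter px eqxx /=.
by apply: hE; rewrite -px per_fix.
Qed.

Lemma R_in i : R i \in reps. Proof. by rewrite /R mem_nth. Qed.
Lemma per_R i : per (R i) = d. Proof. exact: (reps_prop (R_in i)).1. Qed.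
Lemma rep_R i : rep (R i) = R i. Proof. exact: (reps_prop (R_in i)).2. Qed.

Lemma per_Xd (y : Xd iota n d) : per (sval y) = d.
Proof. by apply/inX_per; exact: svalP. Qed.

Lemma idx_lt (y : Xd iota n d) : (index (rep (sval y)) reps < r)%N.
Proof. by rewrite index_mem rep_reps // per_Xd. Qed.

Definition idx (y : Xd iota n d) : 'I_r := Ordinal (idx_lt y).
Definition off (y : Xd iota n d) : 'I_d := inZp (index (sval y) (orbseq (rep (sval y)))).

Lemma decn_in i k : inX iota n d (FrX k (R i)).
Proof. by apply/inX_per; rewrite per_FrX per_R. Qed.

Definition decn (i : 'I_r) (k : nat) : Xd iota n d := exist _ (FrX k (R i)) (decn_in i k).

Lemma decn_mod i k : decn i k = decn i (k %% d).
Proof. by apply: sig_eq => /=; rewrite FrX_mod per_R. Qed.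

Lemma nth_orbseq z k : (k < per z)%N -> nth 0 (orbseq z) k = FrX k z.
Proof. by move=> h; rewrite (nth_map 0%N) ?size_iota // nth_iota. Qed.

Lemma dec_enc y : decn (idx y) (off y) = y.
Proof.
apply: sig_eq => /=; rewrite /R /= nth_index ?rep_reps ?per_Xd //.
have hp : per (rep (sval y)) = d by rewrite per_rep per_Xd.
rewrite -[in X in (_ %% X)%N]hp -FrX_mod -nth_orbseq; last first.
  rewrite -(size_iota 0 (per _)) -(size_map (FrX ^~ (rep (sval y)))) index_mem.
  by rewrite (orbseq_eq (rep_in _)) self_orbseq.
by rewrite nth_index // (orbseq_eq (rep_in _)) self_orbseq.
Qed.

Lemma idx_decn i k : idx (decn i k) = i.
Proof.
apply: val_inj => /=; rewrite rep_FrX rep_R.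
exact: index_uniq (ltn_ord i) reps_uniq.
Qed.

Lemma off_decn i k : off (decn i k) = inZp k.
Proof.
apply: val_inj; rewrite /off /= rep_FrX rep_R.
rewrite FrX_mod -nth_orbseq ?index_uniq ?orbseq_uniq //.
- by rewrite per_R /= modn_mod.
- by rewrite size_map size_iota ltn_pmod // per_gt0.
- by rewrite ltn_pmod // per_gt0.
Qed.

Lemma decn_val i (a b : 'I_d) : decn i (val a + val b) = decn i (val (a + b)%R).
Proof. by rewrite decn_mod. Qed.


Lemma Gcomm (f : Gd iota n d) k (y y' : Xd iota n d) :
  sval y' = FrX k (sval y) -> sval (sval f y') = FrX k (sval (sval f y)).
Proof. by case: f => f [_ hf] /= h; apply: hf => //; exact: frk_gal. Qed.

Lemma Ginj (f : Gd iota n d) : injective (sval f).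
Proof. by case: f => f [hf _] /=; exact: bij_inj. Qed.

Definition pif (f : Gd iota n d) i := idx (sval f (decn i 0)).
Definition af (f : Gd iota n d) i := off (sval f (decn i 0)).

Lemma fdec (f : Gd iota n d) i k : sval f (decn i k) = decn (pif f i) (k + af f i).
Proof.
apply: sig_eq; rewrite (@Gcomm f k (decn i 0)); last by rewrite /= FrX_0.
by rewrite -{1}(dec_enc (sval f (decn i 0))) /= FrX_add.
Qed.

Lemma pif_inj f : injective (pif f).
Proof.
move=> i j e.
have h : sval f (decn j 0) = sval f (decn i (d - af f i + af f j)).
  rewrite !fdec e add0n -addnA (addnC (af f j)) addnA subnK; last exact: ltnW.
  by rewrite decn_mod [in RHS]decn_mod modnDl.
by have := congr1 idx (Ginj h); rewrite !idx_decn.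
Qed.

Definition Psi (f : Gd iota n d) : {ffun 'I_r -> Zmod d} * {perm 'I_r} :=
  ([ffun i => af f i], perm (@pif_inj f)).

Lemma Psi_mul f g h : Gd_comp f g h -> Psi h = wreath_mul (Psi f) (Psi g).
Proof.
move=> hc.
have eh : forall i, sval h (decn i 0) = decn (pif g (pif f i)) (af f i + af g (pif f i)).
  by move=> i; rewrite hc fdec add0n fdec.
rewrite /Psi /wreath_mul /=; congr (_, _).
  apply/ffunP => i; rewrite !ffunE permE /af eh off_decn; apply: val_inj => //.
apply/permP => i; rewrite permM !permE /pif eh idx_decn //.
Qed.

Lemma Psi_inj : injective Psi.
Proof.
move=> f g; rewrite /Psi => -[ea ep].
have hp : forall i, pif f i = pif g i.
  by move=> i; have := congr1 (fun s : {perm 'I_r} => s i) ep; rewrite !permE.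
have ha : forall i, af f i = af g i.
  by move=> i; have := congr1 (fun s : {ffun 'I_r -> Zmod d} => s i) ea; rewrite !ffunE.
apply: sig_eq; apply: functional_extensionality => y.
by rewrite -(dec_enc y) !fdec hp ha.
Qed.

Lemma shift_enc j (x y : Xd iota n d) : sval y = FrX j (sval x) ->
  idx y = idx x /\ off y = inZp (j + off x).
Proof.
move=> hy; have -> : y = decn (idx x) (j + off x).
  by apply: sig_eq; rewrite hy -{1}(dec_enc x) /= FrX_add.
by rewrite idx_decn off_decn.
Qed.

Lemma Xd_fix (y : Xd iota n d) : FrX d (sval y) = sval y.
Proof. by rewrite -{1}(per_Xd y) per_fix. Qed.

Section Hfun.
Variables (a : {ffun 'I_r -> Zmod d}) (p : {perm 'I_r}).

Definition hfun (y : Xd iota n d) : Xd iota n d :=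
  decn (p (idx y)) (off y + a (idx y)).

Definition hinv (y : Xd iota n d) : Xd iota n d :=
  decn (p^-1%g (idx y)) (val (off y - a (p^-1%g (idx y)))%R).

Lemma hfun_prop : bijective hfun /\ forall g, isGal iota g -> forall x y : Xd iota n d,
   sval y = Defs.gact g (sval x) -> sval (hfun y) = Defs.gact g (sval (hfun x)).
Proof.
split.
  exists hinv => y.
    rewrite /hinv /hfun idx_decn off_decn permK.
    have -> : (inZp (off y + a (idx y)) : 'I_d) = (off y + a (idx y))%R by apply: val_inj.
    by rewrite addrK dec_enc.
  rewrite /hinv /hfun idx_decn off_decn permKV valZpK decn_val subrK dec_enc //.
move=> g hg x y hxy.
have [j hj] := galCX hg (isT : (0 < d)%N).
rewrite hj ?Xd_fix //; rewrite hj ?Xd_fix // in hxy.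
have [e1 e2] := shift_enc hxy.
rewrite /hfun e1 e2 /= -FrX_add [LHS]FrX_mod [RHS]FrX_mod per_R modnDml addnA //.
Qed.

Definition hG : Gd iota n d := exist _ hfun hfun_prop.

Lemma Psi_hG : Psi hG = (a, p).
Proof.
have e : forall i, sval hG (decn i 0) = decn (p i) (a i).
  by move=> i; rewrite /= /hfun idx_decn off_decn.
rewrite /Psi; congr (_, _).
  by apply/ffunP => i; rewrite ffunE /af e off_decn valZpK.
by apply/permP => i; rewrite permE /pif e idx_decn.
Qed.

End Hfun.

Lemma Psi_bij : bijective Psi.
Proof.
have hs : forall u, exists f, Psi f = u by move=> [a p]; exists (hG a p); exact: Psi_hG.
pose Pinv u := proj1_sig (constructive_indefinite_description _ (hs u)).
have PinvK : forall u, Psi (Pinv u) = u.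
  by move=> u; exact: proj2_sig (constructive_indefinite_description _ (hs u)).
exists Pinv => [f|u]; last exact: PinvK.
by apply: Psi_inj; rewrite PinvK.
Qed.

Lemma Xd_card : has_card (inX iota n d) (r * d).
Proof.
exists (map (fun q : 'I_r * 'I_d => sval (decn q.1 q.2)) (enum {: 'I_r * 'I_d})).
split; first by rewrite size_map -cardE card_prod !card_ord.
split.
  rewrite map_inj_uniq ?enum_uniq // => [[i k] [i' k']] /= e.
  have e' : decn i k = decn i' k' by apply: sig_eq.
  have := congr1 idx e'; have := congr1 off e'; rewrite !idx_decn !off_decn !valZpK.
  by move=> -> ->.
move=> x; split => [hx|/mapP [q _ ->]]; last exact: svalP.
apply/mapP; exists (idx (exist _ x hx), off (exist _ x hx)); first by rewrite mem_enum.
by rewrite (dec_enc (exist _ x hx)).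
Qed.

End Part2.

End Frob.

Lemma wreath_sdp (A : zmodType) (r : nat) u v :
  @wreath_mul A r u v = @sdp_mul A r (@hperm A r) u v.
Proof. by rewrite /wreath_mul /sdp_mul; congr (_, _); apply/ffunP => i; rewrite !ffunE. Qed.

Theorem mainTheorem9 (F : finFieldType) (K : closedFieldType)
  (iota : {rmorphism F -> K})
  (algK : forall x : K, exists p : {poly F}, p != 0 /\ root (map_poly iota p) x)
  (n : nat) :
  (* (1) M is the product of the G_d, via restriction to the X_d *)
  (exists Phi : Mperm iota n -> (forall d : nat, Gd iota n d),
      bijective Phi
      /\ (forall s d (x : Xd iota n d), sval (sval (Phi s d) x) = sval s (sval x))
      /\ (forall s t u : Mperm iota n, (forall x, sval u x = sval t (sval s x)) ->
            forall d, Gd_comp (Phi s d) (Phi t d) (Phi u d)))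
  /\
  (* (2),(3): #X_d = N, r_d = N / d *)
  (forall d : nat, (0 < d)%N ->
     exists N : nat, has_card (inX iota n d) N /\ (d %| N)%N
     /\ (exists Psi : Gd iota n d -> {ffun 'I_(N %/ d) -> Zmod d} * {perm 'I_(N %/ d)},
           is_iso (@Gd_comp F K iota n d) (@wreath_mul _ (N %/ d)) Psi)
     /\ (exists Psi : Gd iota n d -> {ffun 'I_(N %/ d) -> Zmod d} * {perm 'I_(N %/ d)},
           is_iso (@Gd_comp F K iota n d) (@sdp_mul _ (N %/ d) (@hperm _ (N %/ d))) Psi)).
Proof.
split.
  exists (@Phi F K iota algK n); split; first exact: Phi_bij.
  split; first by move=> s d x; exact: Phi_val.
  exact: Phi_comp.
case=> [//|d'] _.
have [E hE] := @fin_fix F K n d'.+1 isT.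
exists (r algK d' E * d'.+1)%N; rewrite mulnK //.
split; first exact: Xd_card.
split; first exact: dvdn_mull.
split.
  exists (Psi algK hE); split; first exact: Psi_bij.
  exact: Psi_mul.
exists (Psi algK hE); split; first exact: Psi_bij.
by move=> f g h hc; rewrite -wreath_sdp; exact: Psi_mul.
Qed.
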